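(* Let $R$ be a commutative elementary divisor domain and $A,B\in M_2(R)$. Let $P_A,P_B,Q_A,Q_B\in GL_2(R)$ with $P_AAQ_A=E=\mathrm{diag}(\varepsilon_1,\varepsilon_2)$ and $P_BBQ_B=\Delta=\mathrm{diag}(\delta_1,\delta_2)$ $d$-matrices, and write $P_BP_A^{-1}=(s_{ij})_{i,j=1}^2$. Then the element $\big((\varepsilon_2,\delta_2),\,s_{21}[\varepsilon_1,\delta_1]\big)$ does not depend (up to a unit factor) on the choice of $P_A,P_B$, and a left greatest common divisor $(A,B)_l$ of $A$ and $B$ is equivalent to the $d$-matrix $$\mathrm{diag}\Big((\varepsilon_1,\delta_1),\ \big(\varepsilon_2,\delta_2,[\varepsilon_1,\delta_1]s_{21}\big)\Big).$$
   Context: An elementary divisor domain: a commutative integral domain over which every matrix is equivalent ($PAQ$, $P,Q$ invertible) to a $d$-matrix, i.e. a diagonal matrix $\mathrm{diag}(\varphi_1,\dots)$ with $\varphi_i\mid\varphi_{i+1}$; it is in particular a Bezout domain. $(a,b,\dots)$ denotes a greatest common divisor and $[a,b]$ a least common multiple (with $(a,0)=a$, $[a,0]=0$), both defined up to unit factors. $D$ is a left greatest common divisor of $A,B$ if $A=DA_1$, $B=DB_1$ for some matrices $A_1,B_1$ and every $D'$ with this property is a left divisor of $D$ ($D=D'C$ for some $C$). *)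

(* Defs.v *)
From HB Require Import structures.
From mathcomp Require Import all_boot all_order all_algebra.
Set Implicit Arguments. Unset Strict Implicit. Unset Printing Implicit Defensive.
Import GRing.Theory.
Local Open Scope ring_scope.

Definition rdvd (R : comRingType) (a b : R) : Prop := exists c : R, b = a * c.

Definition rassoc (R : comUnitRingType) (a b : R) : Prop :=
  exists u : R, u \is a GRing.unit /\ b = u * a.

Definition is_gcd (R : comRingType) (s : seq R) (g : R) : Prop :=
  (forall x, x \in s -> rdvd g x) /\
  (forall d : R, (forall x, x \in s -> rdvd d x) -> rdvd d g).

Definition is_lcm (R : comRingType) (a b l : R) : Prop :=
  rdvd a l /\ rdvd b l /\ (forall m : R, rdvd a m -> rdvd b m -> rdvd l m).

Definition is_dmatrix (R : comRingType) (m n : nat) (M : 'M[R]_(m, n)) : Prop :=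
  (forall (i : 'I_m) (j : 'I_n), (i : nat) <> j -> M i j = 0) /\
  (forall (i i' : 'I_m) (j j' : 'I_n),
      (i : nat) = j -> (i' : nat) = j' -> (i <= i')%N -> rdvd (M i j) (M i' j')).

Definition mx_equiv (R : comUnitRingType) (m n : nat)
  (A N : 'M[R]_(m, n)) : Prop :=
  exists (P : 'M[R]_m) (Q : 'M[R]_n),
    P \in unitmx /\ Q \in unitmx /\ P *m A *m Q = N.

Definition elementary_divisor_domain (R : idomainType) : Prop :=
  forall (m n : nat) (A : 'M[R]_(m, n)),
    exists (P : 'M[R]_m) (Q : 'M[R]_n),
      P \in unitmx /\ Q \in unitmx /\ is_dmatrix (P *m A *m Q).

Definition diag2 (R : comRingType) (a b : R) : 'M[R]_2 :=
  \matrix_(i < 2, j < 2)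
     (if i == j then (if (i : nat) == 0%N then a else b) else 0).

(* the (2,1) entry of a 2x2 matrix (row 2, column 1 in 1-based indexing) *)
Definition entry21 (R : comRingType) (M : 'M[R]_2) : R := M (inord 1) (inord 0).

Definition mx_ldvd (R : comRingType) (n : nat) (D A : 'M[R]_n) : Prop :=
  exists A1 : 'M[R]_n, A = D *m A1.

Definition is_lgcd (R : comRingType) (n : nat) (A B D : 'M[R]_n) : Prop :=
  mx_ldvd D A /\ mx_ldvd D B /\
  (forall D' : 'M[R]_n, mx_ldvd D' A -> mx_ldvd D' B -> mx_ldvd D' D).

(* Main.v *)
Require Import Defs.
From HB Require Import structures.
From mathcomp Require Import all_boot all_order all_algebra.
From mathcomp Require Import ring zify.
Import GRing.Theory.
Local Open Scope ring_scope.

Notation r0 := (@inord 1 0).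
Notation r1 := (@inord 1 1).

Lemma r0v : (r0 : nat) = 0%N. Proof. by rewrite inordK. Qed.
Lemma r1v : (r1 : nat) = 1%N. Proof. by rewrite inordK. Qed.

Lemma ord2P (i : 'I_2) : i = r0 \/ i = r1.
Proof.
case: i => [[|[|k]] Hk].
- by left; apply: val_inj; rewrite /= r0v.
- by right; apply: val_inj; rewrite /= r1v.
- by [].
Qed.

Lemma r01 : (r0 == r1) = false.
Proof. by rewrite -val_eqE /= r0v r1v. Qed.
Lemma r10 : (r1 == r0) = false.
Proof. by rewrite -val_eqE /= r0v r1v. Qed.

Lemma sum2 (R : nmodType) (F : 'I_2 -> R) : \sum_(i < 2) F i = F r0 + F r1.
Proof.
rewrite big_ord_recl big_ord1.
have -> : (lift ord0 ord0 : 'I_2) = r1 by apply: val_inj; rewrite /= r1v.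
by have -> : (ord0 : 'I_2) = r0 by apply: val_inj; rewrite /= r0v.
Qed.

Lemma det2 (R : comRingType) (M : 'M[R]_2) :
  \det M = M r0 r0 * M r1 r1 - M r0 r1 * M r1 r0.
Proof.
rewrite (expand_det_row M r0) sum2 /cofactor !det_mx11 !mxE r0v r1v.
have -> : (lift r0 0 : 'I_2) = r1 by apply: val_inj; rewrite /= r0v r1v.
have -> : (lift r1 0 : 'I_2) = r0 by apply: val_inj; rewrite /= r0v r1v.
rewrite /= expr0 expr1; ring.
Qed.

Section D2.
Variable R : comRingType.
Lemma diag2_00 (a b : R) : diag2 a b r0 r0 = a.
Proof. by rewrite /diag2 mxE eqxx r0v. Qed.
Lemma diag2_11 (a b : R) : diag2 a b r1 r1 = b.
Proof. by rewrite /diag2 mxE eqxx r1v. Qed.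
Lemma diag2_01 (a b : R) : diag2 a b r0 r1 = 0.
Proof. by rewrite /diag2 mxE r01. Qed.
Lemma diag2_10 (a b : R) : diag2 a b r1 r0 = 0.
Proof. by rewrite /diag2 mxE r10. Qed.
End D2.
Set Implicit Arguments. Unset Strict Implicit. Unset Printing Implicit Defensive.

Section Dvd.
Variable R : comRingType.
Implicit Types (c d x y : R).

Lemma rdvd_refl d : rdvd d d. Proof. by exists 1; rewrite mulr1. Qed.
Lemma rdvd0 d : rdvd d 0. Proof. by exists 0; rewrite mulr0. Qed.
Lemma rdvd_trans (a b c : R) : rdvd a b -> rdvd b c -> rdvd a c.
Proof. by move=> [x ->] [y ->]; exists (x * y); rewrite mulrA. Qed.
Lemma rdvd_mulr d (a b : R) : rdvd d a -> rdvd d (a * b).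
Proof. by move=> [x ->]; exists (x * b); rewrite mulrA. Qed.
Lemma rdvd_mull d (a b : R) : rdvd d b -> rdvd d (a * b).
Proof. by move=> H; rewrite mulrC; apply: rdvd_mulr. Qed.
Lemma rdvd_mul2 d d' (a b : R) : rdvd d a -> rdvd d' b -> rdvd (d * d') (a * b).
Proof. by move=> [x ->] [y ->]; exists (x * y); ring. Qed.
Lemma rdvd_comb2 d (a b : R) : rdvd d a -> rdvd d b ->
  forall p q, rdvd d (a * p + b * q).
Proof. by move=> [x ->] [y ->] p q; exists (x * p + y * q); ring. Qed.
Lemma rdvdD d (a b : R) : rdvd d a -> rdvd d b -> rdvd d (a + b).
Proof. by move=> [x ->] [y ->]; exists (x + y); ring. Qed.
Lemma rdvdN d (a : R) : rdvd d a -> rdvd d (- a).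
Proof. by move=> [x ->]; exists (- x); ring. Qed.
Lemma rdvd_sum d (I : Type) (r : seq I) (P : pred I) (F : I -> R) :
  (forall i, P i -> rdvd d (F i)) -> rdvd d (\sum_(i <- r | P i) F i).
Proof.
move=> H; apply: (big_rec (fun x => rdvd d x)); first exact: rdvd0.
by move=> i x Pi Hx; apply: rdvdD => //; apply: H.
Qed.
Lemma rdvd_pm d x y : rdvd d x -> (y = x \/ y = - x \/ y = 0) -> rdvd d y.
Proof. by move=> Hx [->|[->|->]] //; [apply: rdvdN | apply: rdvd0]. Qed.

Definition minor n (N : 'M[R]_(2, n)) (a b : 'I_n) :=
  N r0 a * N r1 b - N r0 b * N r1 a.
Definition mdvd n d (N : 'M[R]_(2, n)) := forall a b, rdvd d (minor N a b).
Definition cdiv m n d (N : 'M[R]_(m, n)) := forall i j, rdvd d (N i j).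
Definition mgcd n (N : 'M[R]_(2, n)) g :=
  mdvd g N /\ forall x, mdvd x N -> rdvd x g.

Lemma minor_mull n (P : 'M[R]_2) (N : 'M[R]_(2, n)) a b :
  minor (P *m N) a b = \det P * minor N a b.
Proof. by rewrite /minor det2 !mxE !sum2; ring. Qed.

Lemma minor_mulr n k (N : 'M[R]_(2, n)) (C : 'M[R]_(n, k)) a b :
  minor (N *m C) a b = \sum_i \sum_j minor N i j * (C i a * C j b).
Proof.
rewrite /minor !mxE.
have E : forall (u v : 'I_n -> R),
  (\sum_i u i) * (\sum_j v j) = \sum_i \sum_j u i * v j.
  by move=> u v; rewrite mulr_suml; apply: eq_bigr => i _; rewrite mulr_sumr.
rewrite !E.
have -> : \sum_i \sum_j (N r0 i * N r1 j - N r0 j * N r1 i) * (C i a * C j b)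
  = \sum_i \sum_j (N r0 i * N r1 j * (C i a * C j b))
    - \sum_i \sum_j (N r0 j * N r1 i * (C i a * C j b)).
  rewrite -sumrB; apply: eq_bigr => i _; rewrite -sumrB.
  by apply: eq_bigr => j _; ring.
congr (_ - _).
  by apply: eq_bigr => i _; apply: eq_bigr => j _; ring.
rewrite [RHS]exchange_big /=.
by apply: eq_bigr => i _; apply: eq_bigr => j _; ring.
Qed.

End Dvd.
Set Implicit Arguments. Unset Strict Implicit. Unset Printing Implicit Defensive.

Section Id.
Variable R : idomainType.
Implicit Types (c d x y : R).

Lemma cdiv_mull m n p d (X : 'M[R]_(p, m)) (N : 'M[R]_(m, n)) :
  cdiv d N -> cdiv d (X *m N).
Proof. by move=> H i j; rewrite mxE; apply: rdvd_sum => k _; apply: rdvd_mull. Qed.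
Lemma cdiv_mulr m n p d (Y : 'M[R]_(n, p)) (N : 'M[R]_(m, n)) :
  cdiv d N -> cdiv d (N *m Y).
Proof. by move=> H i j; rewrite mxE; apply: rdvd_sum => k _; apply: rdvd_mulr. Qed.
Lemma cdiv_equiv m n d (P : 'M[R]_m) (Q : 'M[R]_n) (N : 'M[R]_(m, n)) :
  P \in unitmx -> Q \in unitmx -> cdiv d N <-> cdiv d (P *m N *m Q).
Proof.
move=> hP hQ; split=> H; first by apply: cdiv_mulr; apply: cdiv_mull.
have -> : N = invmx P *m (P *m N *m Q) *m invmx Q.
  by rewrite mulmxA mulKmx // mulmxK.
by apply: cdiv_mulr; apply: cdiv_mull.
Qed.

Lemma mdvd_mull n d (P : 'M[R]_2) (N : 'M[R]_(2, n)) :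
  mdvd d N -> mdvd d (P *m N).
Proof. by move=> H a b; rewrite minor_mull; apply: rdvd_mull. Qed.
Lemma mdvd_mulr n k d (C : 'M[R]_(n, k)) (N : 'M[R]_(2, n)) :
  mdvd d N -> mdvd d (N *m C).
Proof.
move=> H a b; rewrite minor_mulr; apply: rdvd_sum => i _; apply: rdvd_sum => j _.
exact: rdvd_mulr.
Qed.
Lemma mdvd_equiv n d (P : 'M[R]_2) (Q : 'M[R]_n) (N : 'M[R]_(2, n)) :
  P \in unitmx -> Q \in unitmx -> mdvd d N <-> mdvd d (P *m N *m Q).
Proof.
move=> hP hQ; split=> H; first by apply: mdvd_mulr; apply: mdvd_mull.
have -> : N = invmx P *m (P *m N *m Q) *m invmx Q.
  by rewrite mulmxA mulKmx // mulmxK.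
by apply: mdvd_mulr; apply: mdvd_mull.
Qed.
Lemma mgcd_equiv n g (P : 'M[R]_2) (Q : 'M[R]_n) (N : 'M[R]_(2, n)) :
  P \in unitmx -> Q \in unitmx -> mgcd (P *m N *m Q) g -> mgcd N g.
Proof.
move=> hP hQ [H1 H2]; split; first by apply: (proj2 (mdvd_equiv _ N hP hQ) H1).
by move=> x Hx; apply: H2; apply: (proj1 (mdvd_equiv _ N hP hQ) Hx).
Qed.

Lemma assoc_dvd (a b : R) : rdvd a b -> rdvd b a -> exists u, u \is a GRing.unit /\ b = u * a.
Proof.
move=> [x Hb] [y Ha].
have [a0|a0] := eqVneq a 0.
  by exists 1; split; rewrite ?unitr1 // Hb a0; ring.
have xy : x * y = 1.
  by apply: (mulfI a0); rewrite mulr1 mulrA -Hb -Ha.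
exists x; split; last by rewrite Hb mulrC.
by apply/unitrP; exists y; rewrite mulrC xy.
Qed.

Lemma mgcd_assoc n (N : 'M[R]_(2, n)) g h : mgcd N g -> mgcd N h ->
  exists u, u \is a GRing.unit /\ h = u * g.
Proof. by move=> [G1 G2] [H1 H2]; apply: assoc_dvd; [apply: H2 | apply: G2]. Qed.

Lemma gcd2P (a b g : R) : is_gcd [:: a; b] g <->
  rdvd g a /\ rdvd g b /\ (forall d, rdvd d a -> rdvd d b -> rdvd d g).
Proof.
split.
  move=> [H1 H2]; split; first by apply: H1; rewrite !inE eqxx.
  split; first by apply: H1; rewrite !inE eqxx orbT.
  move=> d Ha Hb; apply: H2 => z; rewrite !inE => /orP[]/eqP-> //.
move=> [Ha [Hb H]]; split.
  by move=> z; rewrite !inE => /orP[]/eqP->.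
by move=> d Hd; apply: H; apply: Hd; rewrite !inE eqxx ?orbT.
Qed.

Lemma gcd3P (a b c g : R) : is_gcd [:: a; b; c] g <->
  rdvd g a /\ rdvd g b /\ rdvd g c /\
  (forall d, rdvd d a -> rdvd d b -> rdvd d c -> rdvd d g).
Proof.
split.
  move=> [H1 H2]; split; first by apply: H1; rewrite !inE eqxx.
  split; first by apply: H1; rewrite !inE eqxx orbT.
  split; first by apply: H1; rewrite !inE eqxx !orbT.
  move=> d Ha Hb Hc; apply: H2 => z; rewrite !inE => /orP[/eqP->|/orP[]/eqP->] //.
move=> [Ha [Hb [Hc H]]]; split.
  by move=> z; rewrite !inE => /orP[/eqP->|/orP[]/eqP->].
by move=> d Hd; apply: H; apply: Hd; rewrite !inE eqxx ?orbT.
Qed.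

Hypothesis hR : elementary_divisor_domain R.

Lemma bezout2 (a b : R) : exists g u v, is_gcd [:: a; b] g /\ g = a * u + b * v.
Proof.
pose M : 'M[R]_(1, 2) := \matrix_(i, j) (if j == r0 then a else b).
have [P [Q [hP [hQ [Hd1 Hd2]]]]] := hR M.
set G := P *m M *m Q in Hd1 Hd2.
have G1 : G 0 r1 = 0 by apply: Hd1; rewrite r1v.
have M0 : M 0 r0 = a by rewrite mxE eqxx.
have M1 : M 0 r1 = b by rewrite mxE r10.
have cM : forall d, cdiv d M <-> rdvd d a /\ rdvd d b.
  move=> d; split.
    by move=> H; rewrite -M0 -M1; split; apply: H.
  move=> [Ha Hb] i j; rewrite (ord1 i).
  by case: (ord2P j) => ->; rewrite ?M0 ?M1.
have cG : forall d, cdiv d G <-> rdvd d (G 0 r0).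
  move=> d; split; first by move=> H; apply: H.
  move=> H i j; rewrite (ord1 i).
  by case: (ord2P j) => ->; rewrite ?G1 //; apply: rdvd0.
exists (G 0 r0), (P 0 0 * Q r0 r0), (P 0 0 * Q r1 r0); split.
  have HH := proj1 (cM _) (proj2 (cdiv_equiv _ M hP hQ) (proj2 (cG _) (rdvd_refl _))).
  apply/gcd2P; split; first exact: HH.1.
  split; first exact: HH.2.
  move=> d Ha Hb; apply: (proj1 (cG d)).
  by apply: (proj1 (cdiv_equiv _ M hP hQ)); apply: (proj2 (cM d)).
rewrite /G !mxE sum2 !mxE !big_ord_recl !big_ord0 !addr0.
have -> : (ord0 : 'I_1) = 0 by [].
rewrite M0 M1; ring.
Qed.

Lemma gcd_comb2 (a b h : R) : is_gcd [:: a; b] h -> exists u v, h = a * u + b * v.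
Proof.
move=> Hh; have [g [u [v [Hg Eg]]]] := bezout2 a b.
move/gcd2P: Hh => [h1 [h2 h3]]; move/gcd2P: Hg => [g1 [g2 g3]].
have [x Hx] := h3 g g1 g2.
exists (u * x), (v * x); rewrite Hx Eg; ring.
Qed.

Lemma gcd_comb3 (a b c h : R) : is_gcd [:: a; b; c] h ->
  exists u v w, h = a * u + b * v + c * w.
Proof.
move=> Hh; have [g [u [v [Hg Eg]]]] := bezout2 a b.
have [g' [u' [v' [Hg' Eg']]]] := bezout2 g c.
move/gcd3P: Hh => [h1 [h2 [h3 h4]]]; move/gcd2P: Hg => [g1 [g2 g3]].
move/gcd2P: Hg' => [g1' [g2' g3']].
have gd1 : rdvd g' a := rdvd_trans g1' g1.
have gd2 : rdvd g' b := rdvd_trans g1' g2.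
have [x Hx] := h4 g' gd1 gd2 g2'.
exists (u * u' * x), (v * u' * x), (v' * x); rewrite Hx Eg' Eg; ring.
Qed.

End Id.
Set Implicit Arguments. Unset Strict Implicit. Unset Printing Implicit Defensive.

Section Key.
Variable R : idomainType.
Implicit Types (c d x y : R).

Lemma mdvd_row d (M1 M2 : 'M[R]_2) :
  rdvd d (minor M1 r0 r1) ->
  (forall i j, rdvd d (M1 r0 i * M2 r1 j - M2 r0 j * M1 r1 i)) ->
  rdvd d (minor M2 r0 r1) -> mdvd d (row_mx M1 M2).
Proof.
move=> H1 H2 H3 a b.
rewrite -[a]splitK -[b]splitK; case: (split a) => a' /=; case: (split b) => b' /=;
  rewrite /minor ?row_mxEl ?row_mxEr.
- case: (ord2P a') => ->; case: (ord2P b') => ->;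
  first [ apply: (rdvd_pm (rdvd0 d)); right; right; ring
        | apply: (rdvd_pm H1); rewrite /minor; first [left; ring | right; left; ring]].
- exact: H2.
- by apply: (rdvd_pm (H2 b' a')); right; left; ring.
- case: (ord2P a') => ->; case: (ord2P b') => ->;
  first [ apply: (rdvd_pm (rdvd0 d)); right; right; ring
        | apply: (rdvd_pm H3); rewrite /minor; first [left; ring | right; left; ring]].
Qed.

Lemma minor_lr (M1 M2 : 'M[R]_2) i j :
  minor (row_mx M1 M2) (lshift 2 i) (rshift 2 j) =
  M1 r0 i * M2 r1 j - M2 r0 j * M1 r1 i.
Proof. by rewrite /minor !row_mxEl !row_mxEr. Qed.
Lemma minor_ll (M1 M2 : 'M[R]_2) i j :
  minor (row_mx M1 M2) (lshift 2 i) (lshift 2 j) = minor M1 i j.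
Proof. by rewrite /minor !row_mxEl. Qed.
Lemma minor_rr (M1 M2 : 'M[R]_2) i j :
  minor (row_mx M1 M2) (rshift 2 i) (rshift 2 j) = minor M2 i j.
Proof. by rewrite /minor !row_mxEr. Qed.

Lemma mulmx_diag2_0 (S : 'M[R]_2) a b i : (S *m diag2 a b) i r0 = S i r0 * a.
Proof. by rewrite mxE sum2 diag2_00 diag2_10; ring. Qed.
Lemma mulmx_diag2_1 (S : 'M[R]_2) a b i : (S *m diag2 a b) i r1 = S i r1 * b.
Proof. by rewrite mxE sum2 diag2_01 diag2_11; ring. Qed.

Hypothesis hR : elementary_divisor_domain R.

Lemma key (S : 'M[R]_2) (e1 e2 d1 d2 h1 l h2 : R) :
  S \in unitmx -> rdvd e1 e2 -> rdvd d1 d2 -> is_gcd [:: e1; d1] h1 ->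
  is_lcm e1 d1 l -> is_gcd [:: e2; d2; l * S r1 r0] h2 ->
  mgcd (row_mx (S *m diag2 e1 e2) (diag2 d1 d2)) (h1 * h2).
Proof.
move=> hS [c Hc] [k Hk] Hh1 Hl Hh2.
have [u [v Eh1]] := gcd_comb2 hR Hh1.
have [u' [v' [w' Eh2]]] := gcd_comb3 hR Hh2.
move/gcd2P: Hh1 => [he1 [hd1 hg1]].
move/gcd3P: Hh2 => [he2 [hd2 [hl2 hg2]]].
have [[z Hlz] [[y Hly] Hlm]] := Hl.
set M1 := S *m diag2 e1 e2.
have m00 : M1 r0 r0 = S r0 r0 * e1 by rewrite mulmx_diag2_0.
have m10 : M1 r1 r0 = S r1 r0 * e1 by rewrite mulmx_diag2_0.
have m01 : M1 r0 r1 = S r0 r1 * e2 by rewrite mulmx_diag2_1.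
have m11 : M1 r1 r1 = S r1 r1 * e2 by rewrite mulmx_diag2_1.
split.
  have F1 : rdvd (h1 * h2) (e1 * e2) by apply: rdvd_mul2.
  have F3 : rdvd (h1 * h2) (e1 * d2) by apply: rdvd_mul2.
  have F4 : rdvd (h1 * h2) (d1 * e2) by apply: rdvd_mul2.
  have F5 : rdvd (h1 * h2) (e2 * d2).
    by apply: rdvd_mul2 => //; apply: rdvd_trans he1 _; exists c.
  have F6 : rdvd (h1 * h2) (d1 * d2) by apply: rdvd_mul2 => //; apply: rdvd_trans hd1 _; exists k.
  have F2 : rdvd (h1 * h2) (e1 * d1 * S r1 r0).
    move: he1 hd1 => [a' Ha'] [b' Hb'].
    have [m Hm] : rdvd l (e1 * b').
      apply: Hlm; first by exists b'.
      by exists a'; rewrite Hb' Ha'; ring.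
    apply: (rdvd_trans (rdvd_mul2 (rdvd_refl h1) hl2)).
    exists m; rewrite Hb'; transitivity (h1 * (e1 * b') * S r1 r0); first ring.
    by rewrite Hm; ring.
  apply: mdvd_row.
  - rewrite /minor m00 m01 m10 m11; apply: (rdvd_trans F1).
    by exists (S r0 r0 * S r1 r1 - S r0 r1 * S r1 r0); ring.
  - move=> i j; case: (ord2P i) => ->; case: (ord2P j) => ->;
      rewrite ?m00 ?m01 ?m10 ?m11 ?diag2_00 ?diag2_01 ?diag2_10 ?diag2_11.
    + by apply: (rdvd_trans F2); exists (-1); ring.
    + by apply: (rdvd_trans F3); exists (S r0 r0); ring.
    + by apply: (rdvd_trans F4); exists (- S r1 r1); ring.
    + by apply: (rdvd_trans F5); exists (S r0 r1); ring.
  - rewrite /minor diag2_00 diag2_01 diag2_10 diag2_11.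
    by apply: (rdvd_trans F6); exists 1; ring.
move=> x Hx.
have X1 := Hx (lshift 2 r0) (lshift 2 r1).
rewrite minor_ll /minor m00 m01 m10 m11 in X1.
have X2 := Hx (lshift 2 r0) (rshift 2 r0).
rewrite minor_lr m00 m10 diag2_00 diag2_10 in X2.
have X3 := Hx (lshift 2 r0) (rshift 2 r1).
rewrite minor_lr m00 m10 diag2_01 diag2_11 in X3.
have X4 := Hx (lshift 2 r1) (rshift 2 r0).
rewrite minor_lr m01 m11 diag2_00 diag2_10 in X4.
have X6 := Hx (rshift 2 r0) (rshift 2 r1).
rewrite minor_rr /minor diag2_00 diag2_01 diag2_10 diag2_11 in X6.
set T := invmx S.
have B1 : S r1 r0 * T r0 r1 + S r1 r1 * T r1 r1 = 1.
  have := congr1 (fun M : 'M[R]_2 => M r1 r1) (mulmxV hS).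
  by rewrite /= mxE sum2 mxE eqxx.
have B2 : T r0 r0 * S r0 r0 + T r0 r1 * S r1 r0 = 1.
  have := congr1 (fun M : 'M[R]_2 => M r0 r0) (mulVmx hS).
  by rewrite /= mxE sum2 mxE eqxx.
have dS : \det S \is a GRing.unit by rewrite -unitmxE.
have Y1 : rdvd x (e1 * e2).
  apply: (rdvd_trans X1); exists (\det S)^-1.
  rewrite det2 -[LHS](mulrK dS) det2; ring.
have Y2 : rdvd x (d1 * e2).
  have := rdvd_comb2 X2 X4 (- c * T r0 r1) (- T r1 r1).
  have -> : d1 * e2 = d1 * e2 * (S r1 r0 * T r0 r1 + S r1 r1 * T r1 r1) by rewrite B1 mulr1.
  by move=> H; apply: (rdvd_trans H); exists 1; rewrite Hc; ring.
have Y3 : rdvd x (e1 * d2).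
  have := rdvd_comb2 X3 X2 (T r0 r0) (- k * T r0 r1).
  have -> : e1 * d2 = e1 * d2 * (T r0 r0 * S r0 r0 + T r0 r1 * S r1 r0) by rewrite B2 mulr1.
  by move=> H; apply: (rdvd_trans H); exists 1; rewrite Hk; ring.
have Y4 : rdvd x (h1 * e2).
  by have := rdvd_comb2 Y1 Y2 u v; rewrite Eh1 => H; apply: (rdvd_trans H); exists 1; ring.
have Y5 : rdvd x (h1 * d2).
  by have := rdvd_comb2 Y3 X6 u v; rewrite Eh1 => H; apply: (rdvd_trans H); exists 1; ring.
have Y6 : rdvd x (h1 * (l * S r1 r0)).
  have E1 : e1 * u * l * S r1 r0 = (- (S r0 r0 * e1 * 0 - d1 * (S r1 r0 * e1))) * (u * y).
    by rewrite Hly; ring.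
  have E2 : d1 * v * l * S r1 r0 = (- (S r0 r0 * e1 * 0 - d1 * (S r1 r0 * e1))) * (v * z).
    by rewrite Hlz; ring.
  have -> : h1 * (l * S r1 r0) = e1 * u * l * S r1 r0 + d1 * v * l * S r1 r0.
    by rewrite Eh1; ring.
  rewrite E1 E2 -mulrDr; apply: rdvd_mulr; exact: rdvdN.
have := rdvdD (rdvd_comb2 Y4 Y5 u' v') (rdvd_mulr w' Y6).
rewrite Eh2 => H; apply: (rdvd_trans H); exists 1; ring.
Qed.

End Key.
Set Implicit Arguments. Unset Strict Implicit. Unset Printing Implicit Defensive.

Section Fin.
Variable R : idomainType.
Implicit Types (c d x y : R).

Lemma cdiv_row d (M1 M2 : 'M[R]_2) :
  cdiv d (row_mx M1 M2) <-> cdiv d M1 /\ cdiv d M2.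
Proof.
split.
  by move=> H; split=> i j; [rewrite -(row_mxEl M1 M2) | rewrite -(row_mxEr M1 M2)].
move=> [H1 H2] i b; rewrite -[b]splitK; case: (split b) => b' /=;
  by rewrite ?row_mxEl ?row_mxEr.
Qed.

Lemma cdiv_diag2 d (a b : R) : cdiv d (diag2 a b) <-> rdvd d a /\ rdvd d b.
Proof.
split; first by move=> H; split; [rewrite -(diag2_00 _ a b) | rewrite -(diag2_11 _ a b)].
move=> [Ha Hb] i j; case: (ord2P i) => ->; case: (ord2P j) => ->;
  rewrite ?diag2_00 ?diag2_01 ?diag2_10 ?diag2_11 //; exact: rdvd0.
Qed.

Lemma diag2_mul (a b a' b' : R) : diag2 a b *m diag2 a' b' = diag2 (a * a') (b * b').
Proof.
apply/matrixP => i j; rewrite mxE sum2.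
case: (ord2P i) => ->; case: (ord2P j) => ->;
  rewrite ?diag2_00 ?diag2_01 ?diag2_10 ?diag2_11; ring.
Qed.

Lemma diag2_unit (a b : R) : a \is a GRing.unit -> b \is a GRing.unit ->
  diag2 a b \in unitmx.
Proof.
by move=> ha hb; rewrite unitmxE det2 diag2_00 diag2_01 diag2_10 diag2_11 mulr0 subr0 unitrM ha hb.
Qed.

Lemma gcd_zero (e1 e2 d1 d2 h1 l s h2 : R) : h1 = 0 -> rdvd e1 e2 -> rdvd d1 d2 ->
  is_gcd [:: e1; d1] h1 -> is_lcm e1 d1 l -> is_gcd [:: e2; d2; l * s] h2 -> h2 = 0.
Proof.
move=> -> [c Hc] [k Hk] /gcd2P[[a Ha] [[b Hb] _]] [[z Hz] _] /gcd3P[_ [_ [_ H]]].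
have e10 : e1 = 0 by rewrite Ha mul0r.
have d10 : d1 = 0 by rewrite Hb mul0r.
have [t Ht] : rdvd 0 h2.
  apply: H; exists 0.
  - by rewrite Hc e10 !mul0r.
  - by rewrite Hk d10 !mul0r.
  - by rewrite Hz e10 !mul0r.
by rewrite Ht mul0r.
Qed.

Lemma gcd_conv (e2 d2 g s l g0 : R) : is_gcd [:: e2; d2] g ->
  is_gcd [:: g; s * l] g0 -> is_gcd [:: e2; d2; l * s] g0.
Proof.
move=> /gcd2P[ge [gd gg]] /gcd2P[g0g [g0s g0g']].
apply/gcd3P; split; first exact: rdvd_trans g0g ge.
split; first exact: rdvd_trans g0g gd.
split; first by rewrite mulrC.
by move=> d H1 H2 H3; apply: g0g'; [apply: gg | rewrite mulrC].
Qed.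

Variables (A B : 'M[R]_2) (e1 e2 d1 d2 : R).
Hypotheses (he : rdvd e1 e2) (hd : rdvd d1 d2).

Lemma N'_eq (PA QA PB QB : 'M[R]_2) : PA \in unitmx ->
  PA *m A *m QA = diag2 e1 e2 -> PB *m B *m QB = diag2 d1 d2 ->
  PB *m row_mx A B *m block_mx QA 0 0 QB =
  row_mx ((PB *m invmx PA) *m diag2 e1 e2) (diag2 d1 d2).
Proof.
move=> hPA hA hB.
rewrite mul_mx_row mul_row_block !mulmx0 addr0 add0r -hA -hB.
by rewrite !mulmxA mulmxKV.
Qed.

Lemma block_unit (QA QB : 'M[R]_2) : QA \in unitmx -> QB \in unitmx ->
  block_mx QA 0 0 QB \in unitmx.
Proof. by rewrite !unitmxE det_ublock unitrM => -> ->. Qed.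

Hypothesis hR : elementary_divisor_domain R.

Lemma mgcd_N (PA QA PB QB : 'M[R]_2) (h1 l h2 : R) :
  PA \in unitmx -> QA \in unitmx -> PB \in unitmx -> QB \in unitmx ->
  PA *m A *m QA = diag2 e1 e2 -> PB *m B *m QB = diag2 d1 d2 ->
  is_gcd [:: e1; d1] h1 -> is_lcm e1 d1 l ->
  is_gcd [:: e2; d2; l * entry21 (PB *m invmx PA)] h2 ->
  mgcd (row_mx A B) (h1 * h2).
Proof.
move=> hPA hQA hPB hQB hA hB Hh1 Hl Hh2.
apply: (mgcd_equiv (P := PB) (Q := block_mx QA 0 0 QB)) => //.
  exact: block_unit.
rewrite (N'_eq hPA hA hB); apply: key => //; first by rewrite unitmx_mul hPB unitmx_inv.
  exact: Hl.
exact: Hh2.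
Qed.

Lemma cdiv_N (PA QA PB QB : 'M[R]_2) d :
  PA \in unitmx -> QA \in unitmx -> PB \in unitmx -> QB \in unitmx ->
  PA *m A *m QA = diag2 e1 e2 -> PB *m B *m QB = diag2 d1 d2 ->
  cdiv d (row_mx A B) <-> rdvd d e1 /\ rdvd d d1.
Proof.
move=> hPA hQA hPB hQB hA hB.
have hS : PB *m invmx PA \in unitmx by rewrite unitmx_mul hPB unitmx_inv.
rewrite (cdiv_equiv d (row_mx A B) hPB (block_unit hQA hQB)) (N'_eq hPA hA hB) cdiv_row.
have cE : cdiv d (PB *m invmx PA *m diag2 e1 e2) <-> cdiv d (diag2 e1 e2).
  by rewrite (cdiv_equiv d (diag2 e1 e2) hS (unitmx1 R 2)) mulmx1.
rewrite cE !cdiv_diag2.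
move: he hd => [c ->] [k ->].
split; first by move=> [[H1 _] [H2 _]].
by move=> [H1 H2]; split; split=> //; apply: rdvd_mulr.
Qed.

End Fin.
Unset Implicit Arguments. Set Strict Implicit.

Theorem theorem2p15 (R : idomainType) (hR : elementary_divisor_domain R)
  (A B : 'M[R]_2) (e1 e2 d1 d2 : R)
  (he : rdvd e1 e2) (hd : rdvd d1 d2)
  (PA QA PB QB : 'M[R]_2)
  (hPA : PA \in unitmx) (hQA : QA \in unitmx)
  (hPB : PB \in unitmx) (hQB : QB \in unitmx)
  (hA : PA *m A *m QA = diag2 e1 e2)
  (hB : PB *m B *m QB = diag2 d1 d2) :
  (forall (PA' QA' PB' QB' : 'M[R]_2),
     PA' \in unitmx -> QA' \in unitmx -> PB' \in unitmx -> QB' \in unitmx ->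
     PA' *m A *m QA' = diag2 e1 e2 -> PB' *m B *m QB' = diag2 d1 d2 ->
     forall (g l g0 g' l' g0' : R),
       is_gcd [:: e2; d2] g -> is_lcm e1 d1 l ->
       is_gcd [:: g; entry21 (PB *m invmx PA) * l] g0 ->
       is_gcd [:: e2; d2] g' -> is_lcm e1 d1 l' ->
       is_gcd [:: g'; entry21 (PB' *m invmx PA') * l'] g0' ->
       rassoc g0 g0') /\
  (forall (D : 'M[R]_2) (h1 l h2 : R),
     is_lgcd A B D ->
     is_gcd [:: e1; d1] h1 -> is_lcm e1 d1 l ->
     is_gcd [:: e2; d2; l * entry21 (PB *m invmx PA)] h2 ->
     mx_equiv D (diag2 h1 h2)).
Proof.
split.
  move=> PA' QA' PB' QB' hPA' hQA' hPB' hQB' hA' hB' g l g0 g' l' g0' Hg Hl Hg0 Hg' Hl' Hg0'.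
  have [h1 [u [v [Hh1 _]]]] := bezout2 hR e1 d1.
  have H2 := gcd_conv Hg Hg0.
  have H2' := gcd_conv Hg' Hg0'.
  have m1 := mgcd_N he hd hR hPA hQA hPB hQB hA hB Hh1 Hl H2.
  have m2 := mgcd_N he hd hR hPA' hQA' hPB' hQB' hA' hB' Hh1 Hl' H2'.
  have [h10|h1n0] := eqVneq h1 0.
    have -> := gcd_zero h10 he hd Hh1 Hl H2.
    have -> := gcd_zero h10 he hd Hh1 Hl' H2'.
    by exists 1; rewrite unitr1 mulr0.
  have [w [wu Hw]] := mgcd_assoc m1 m2.
  exists w; split => //; apply: (mulfI h1n0); rewrite Hw; ring.
move=> D h1 l h2 HD Hh1 Hl Hh2.
pose N : 'M[R]_(2, 2 + 2) := row_mx A B.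
have mN : mgcd N (h1 * h2) := mgcd_N he hd hR hPA hQA hPB hQB hA hB Hh1 Hl Hh2.
have cN : forall d, cdiv d N <-> rdvd d e1 /\ rdvd d d1.
  by move=> d; apply: (cdiv_N he hd d hPA hQA hPB hQB hA hB).
(* Bezout-type lgcd from Smith form of N *)
have [P [Q [hP [hQ [Hd1 _]]]]] := hR _ _ N.
set G := P *m N *m Q in Hd1.
have Gr : rsubmx G = 0.
  apply/matrixP => i j; rewrite mxE [RHS]mxE; apply: Hd1 => /= E.
  by have := ltn_ord i; rewrite E; lia.
have GL : G = lsubmx G *m row_mx 1%:M 0.
  by rewrite mul_mx_row mulmx1 mulmx0 -Gr hsubmxK.
have LE : lsubmx G = P *m (N *m lsubmx Q) by rewrite /G -mulmx_lsub mulmxA.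
pose D0 := N *m lsubmx Q.
pose T := row_mx 1%:M 0 *m invmx Q.
have HNT : N = D0 *m T.
  have -> : N = invmx P *m G *m invmx Q.
    by rewrite /G mulmxA (mulKmx hP) (mulmxK hQ).
  by rewrite GL LE /T /D0 -[P *m _ *m _]mulmxA (mulKmx hP) !mulmxA.
have [HA0 HB0] : A = D0 *m lsubmx T /\ B = D0 *m rsubmx T.
  apply: eq_row_mx; rewrite -mul_mx_row hsubmxK; exact: HNT.
move: HD => [[A1 HA1] [[B1 HB1] Hmax]].
have [Z HZ] : mx_ldvd D0 D by apply: Hmax; [exists (lsubmx T) | exists (rsubmx T)].
have HND : N = D *m row_mx A1 B1 by rewrite mul_mx_row -HA1 -HB1.
have HDN : D = N *m (lsubmx Q *m Z) by rewrite HZ /D0 mulmxA.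
have cD : forall d, cdiv d D <-> rdvd d e1 /\ rdvd d d1.
  move=> d; rewrite -cN; split => H.
    by rewrite HND; apply: cdiv_mulr.
  by rewrite HDN; apply: cdiv_mulr.
have mD : mgcd N (\det D).
  split.
    by rewrite HND => a b; rewrite minor_mull; apply: rdvd_mulr; apply: rdvd_refl.
  move=> x Hx; have -> : \det D = minor D r0 r1 by rewrite det2.
  by rewrite HDN; apply: mdvd_mulr.
have [P2 [Q2 [hP2 [hQ2 [Ed1 Ed2]]]]] := hR _ _ D.
set G2 := P2 *m D *m Q2 in Ed1 Ed2.
set p := G2 r0 r0; set q := G2 r1 r1.
have HG2 : G2 = diag2 p q.
  apply/matrixP => i j; case: (ord2P i) => ->; case: (ord2P j) => ->;
    rewrite ?diag2_00 ?diag2_01 ?diag2_10 ?diag2_11 //; apply: Ed1; by rewrite r0v r1v.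
have pq : rdvd p q by apply: Ed2; rewrite ?r0v ?r1v.
have cG : forall d, cdiv d D <-> rdvd d p.
  move=> d; rewrite (cdiv_equiv d D hP2 hQ2) -/G2 HG2 cdiv_diag2.
  split; first by case.
  by move=> H; split => //; apply: rdvd_trans H pq.
have ph1 : rdvd p h1.
  have [H1 H2] := proj1 (cD p) (proj2 (cG p) (rdvd_refl p)).
  by move/gcd2P: Hh1 => [_ [_ H]]; apply: H.
have h1p : rdvd h1 p.
  apply: (proj1 (cG h1)); apply: (proj2 (cD h1)).
  by move/gcd2P: Hh1 => [H1 [H2 _]].
have [u [uu Hu]] := assoc_dvd h1p ph1.
have [w [wu Hw]] := mgcd_assoc mN mD.
have Edet : p * q = \det P2 * \det D * \det Q2.
  by rewrite -!det_mulmx -/G2 [in RHS]HG2 det2 diag2_00 diag2_01 diag2_10 diag2_11; ring.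
have [h10|h1n0] := eqVneq h1 0.
  have h20 := gcd_zero h10 he hd Hh1 Hl Hh2.
  have p0 : p = 0 by rewrite Hu h10 mulr0.
  have q0 : q = 0 by move: pq => [t ->]; rewrite p0 mul0r.
  exists P2, Q2; split => //; split => //.
  by rewrite -/G2 HG2 p0 q0 h10 h20.
have dPu : \det P2 \is a GRing.unit by rewrite -unitmxE.
have dQu : \det Q2 \is a GRing.unit by rewrite -unitmxE.
set K := \det P2 * w * \det Q2.
have Ku : K \is a GRing.unit by rewrite /K !unitrM dPu wu dQu.
have uqK : u * q = K * h2.
  apply: (mulfI h1n0); transitivity (p * q); first by rewrite Hu; ring.
  by rewrite Edet Hw /K; ring.
exists (diag2 u^-1 (K^-1 * u) *m P2), Q2; split.
  by rewrite unitmx_mul hP2 andbT diag2_unit // ?unitrV // unitrM unitrV Ku uu.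
split => //.
rewrite -!mulmxA (mulmxA P2) -/G2 HG2 diag2_mul.
have -> : K^-1 * u * q = h2 by rewrite -mulrA uqK mulrA (mulVr Ku) mul1r.
by rewrite Hu mulrA (mulVr uu) mul1r.
Qed.
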